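(* Let $n\in\mathbb N$ and let $W,W',M,M'$ be pairwise disjoint sets, each of cardinality $n$. There exist functions $\succ_{W\cup W'}:\mathcal P(W,M)\to\mathcal F(W\cup W',M\cup M')$ and $\succ_{M\cup M'}:\mathcal P(M,W)\to\mathcal F(M\cup M',W\cup W')$ such that for every $\succ_W\in\mathcal P(W,M)$, $\succ_M\in\mathcal P(M,W)$ and every (possibly imperfect) marriage $\mu$ between $W$ and $M$, the following are equivalent: (1) $\mu$ is stable with respect to $\succ_W$ and $\succ_M$; (2) $\mu$ is a submarriage of some marriage between $W\cup W'$ and $M\cup M'$ that is stable with respect to $\succ_{W\cup W'}(\succ_W)$ and $\succ_{M\cup M'}(\succ_M)$.
   Context: $\mathcal P(A,B)$ is the set of profiles assigning to each $a\in A$ a preference list, i.e. a totally ordered subset of $B$ (members of $B$ not on the list are unacceptable); $\mathcal F(A,B)\subseteq\mathcal P(A,B)$ consists of profiles in which every list contains all of $B$. A participant prefers $x$ over $x'$ if $x$ precedes $x'$ on their list, or $x$ is on the list and $x'$ is not (being single counts as being matched to someone off the list). A marriage is a one-to-one map between a subset of the women and a subset of the men. It is stable if every married participant is married to someone on their list and there is no blocking pair $(w,m)$ where $w$ prefers $m$ to her current situation and $m$ prefers $w$ to his. A marriage $\mu$ between subsets of $W\subseteq \widetilde W$ and $M\subseteq\widetilde M$ is a submarriage of a marriage $\mu'$ between $\widetilde W$ and $\widetilde M$ if for all $w\in W$, $m\in M$: $\mu'(w)=m$ iff $\mu(w)=m$. *)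

(* Defs.v *)
From mathcomp Require Import all_boot.
Set Implicit Arguments. Unset Strict Implicit. Unset Printing Implicit Defensive.

(* A preference list of a participant is a duplicate-free sequence (a totally
   ordered subset of the other side); a profile assigns one to each member. *)
Definition profile (A B : finType) (p : A -> seq B) : Prop :=
  forall a, uniq (p a).

Definition full_profile (A B : finType) (p : A -> seq B) : Prop :=
  forall a, uniq (p a) /\ (forall b, b \in p a).

(* "l prefers x over its current situation cur" (cur = None means single,
   which counts like being matched to someone off the list): x precedes y on
   l, or x is on l and y is not. *)
Definition prefers (B : eqType) (l : seq B) (x : B) (cur : option B) : bool :=
  (x \in l) &&
  (match cur with None => true | Some y => (y \notin l) || (index x l < index y l) end).

Definition marriage (A B : finType) (mu : A -> option B) : Prop :=
  forall a1 a2 b, mu a1 = Some b -> mu a2 = Some b -> a1 = a2.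

Definition husband_of (A B : finType) (mu : A -> option B) (b : B) : option A :=
  [pick a | mu a == Some b].

Definition stable (A B : finType) (pA : A -> seq B) (pB : B -> seq A)
  (mu : A -> option B) : Prop :=
  (forall a b, mu a = Some b -> b \in pA a /\ a \in pB b) /\
  (forall a b, ~ (prefers (pA a) b (mu a) && prefers (pB b) a (husband_of mu b))).

Definition submarriage (W W' M M' : finType) (mu : W -> option M)
  (mu' : (W + W')%type -> option (M + M')%type) : Prop :=
  forall (w : W) (m : M), mu' (inl w) = Some (inl m) <-> mu w = Some m.

(* Main.v *)
Require Import Defs.
From mathcomp Require Import all_boot.
Set Implicit Arguments. Unset Strict Implicit. Unset Printing Implicit Defensive.

Definition complete (T : finType) (p : seq T) : seq T :=
  p ++ [seq x <- enum T | x \notin p].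

Lemma complete_full (T : finType) (p : seq T) :
  uniq p -> uniq (complete p) /\ (forall x, x \in complete p).
Proof.
move=> up; split.
  rewrite cat_uniq up filter_uniq ?enum_uniq // andbT /=.
  by apply/hasPn => x; rewrite mem_filter => /andP[].
move=> x; rewrite mem_cat mem_filter mem_enum andbT; exact: orbN.
Qed.

Lemma index_complete_in (T : finType) (p : seq T) x :
  x \in p -> index x (complete p) = index x p.
Proof. by move=> xp; rewrite /complete index_cat xp. Qed.

Lemma index_complete_out (T : finType) (p : seq T) x :
  x \notin p -> size p <= index x (complete p).
Proof. by move=> /negbTE xp; rewrite /complete index_cat xp leq_addr. Qed.

Lemma prefers_full (B : eqType) (L : seq B) x c :
  (forall z, z \in L) -> prefers L x (Some c) = (index x L < index c L).
Proof. by move=> full; rewrite /prefers !full. Qed.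

Definition realL (X Y : finType) (l : seq X) (d : Y) : seq (X + Y)%type :=
  complete (map inl l ++ [:: inr d]).

Definition dumL (X Y Z : finType) (a : X) (h : Z -> Y) : seq (X + Y)%type :=
  complete (inl a :: map (fun z => inr (h z)) (enum Z)).

Lemma realL_uniq (X Y : finType) (l : seq X) (d : Y) : uniq l ->
  uniq (map inl l ++ [:: inr d] : seq (X + Y)%type).
Proof.
move=> ul; rewrite cat_uniq map_inj_uniq //=; last by move=> ?? [].
rewrite /= orbF andbT ul /=; by apply/mapP => -[].
Qed.

Lemma realL_full (X Y : finType) (l : seq X) (d : Y) : uniq l ->
  uniq (realL l d) /\ (forall z, z \in realL l d).
Proof. by move=> ul; apply: complete_full; apply: realL_uniq. Qed.

Lemma dumL_full (X Y Z : finType) (a : X) (h : Z -> Y) : injective h ->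
  uniq (dumL a h) /\ (forall z, z \in dumL a h).
Proof.
move=> ih; apply: complete_full => /=.
rewrite map_inj_uniq ?enum_uniq ?andbT; last by move=> ?? [] /ih.
by apply/mapP => -[].
Qed.

Section RealFacts.
Variables (X Y : finType) (l : seq X) (d : Y).
Hypothesis ul : uniq l.
Let L := realL l d.

Lemma F1 y : y \in l -> index (inl y) L = index y l.
Proof.
move=> yl; rewrite /L /realL index_complete_in; last by rewrite mem_cat map_f.
by rewrite index_cat map_f // index_map //; move=> ?? [].
Qed.

Lemma F2 y : y \notin l -> size l < index (inl y) L.
Proof.
move=> yl; rewrite /L /realL.
have -> : size l = index (inr d : (X + Y)%type) (map inl l ++ [:: inr d]).
  rewrite index_cat; case: mapP => [[? _ //]|_]; by rewrite size_map /= eqxx addn0.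
apply: leq_trans (index_complete_out _).
  by rewrite index_mem mem_cat mem_seq1 eqxx orbT.
rewrite mem_cat mem_seq1 /= orbF.
by apply/mapP => -[z zl [eq]]; move: yl; rewrite eq zl.
Qed.

Lemma F3 : index (inr d) L = size l.
Proof.
rewrite /L /realL index_complete_in ?mem_cat ?inE ?eqxx ?orbT //.
rewrite index_cat; case: mapP => [[? _ //]|_]; by rewrite size_map /= eqxx addn0.
Qed.

Lemma F4 z : size l <= index (inr z) L.
Proof.
case: (z =P d) => [->|ne]; first by rewrite F3.
rewrite /L /realL; apply: leq_trans (index_complete_out _).
  by rewrite size_cat size_map leq_addr.
rewrite mem_cat inE negb_or; apply/andP; split; first by apply/mapP => -[].
by apply/eqP => -[].
Qed.

Lemma Lfull z : z \in L. Proof. by case: (realL_full d ul) => _; apply. Qed.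
Lemma Lpref a c : prefers L a (Some c) = (index a L < index c L).
Proof. exact: prefers_full Lfull. Qed.

Lemma A1 x y : prefers l x (Some y) -> prefers L (inl x) (Some (inl y)).
Proof.
rewrite Lpref.
rewrite /prefers => /andP[xl]; rewrite (F1 xl).
have hx : index x l < size l by rewrite index_mem.
case: (boolP (y \in l)) => [yl|yl _]; first by rewrite (F1 yl) /=.
exact: leq_trans hx (ltnW (F2 yl)).
Qed.
Lemma A2 x z : prefers l x None -> prefers L (inl x) (Some (inr z)).
Proof.
rewrite Lpref.
rewrite /prefers andbT => xl; rewrite (F1 xl).
by apply: leq_trans (F4 z); rewrite index_mem.
Qed.

Lemma B1 x y : y \in l -> prefers L (inl x) (Some (inl y)) -> prefers l x (Some y).
Proof.
move=> yl; rewrite Lpref.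
rewrite /prefers yl (F1 yl) /=.
case: (boolP (x \in l)) => [xl|xl]; first by rewrite (F1 xl).
move=> h; have := leq_trans (F2 xl) (ltnW h).
by rewrite ltnNge ltnW // index_mem.
Qed.

Lemma B2 x : prefers L (inl x) (Some (inr d)) -> prefers l x None.
Proof.
rewrite Lpref.
rewrite /prefers andbT F3.
case: (boolP (x \in l)) => // xl h.
by have := ltn_trans (F2 xl) h; rewrite ltnn.
Qed.

Lemma C1 y z : y \in l -> ~~ prefers L (inr z) (Some (inl y)).
Proof.
move=> yl; rewrite Lpref.
rewrite (F1 yl) -leqNgt; apply: leq_trans (F4 z); apply: ltnW; by rewrite index_mem.
Qed.

Lemma C2 z : ~~ prefers L (inr z) (Some (inr d)).
Proof.
rewrite Lpref.
by rewrite F3 -leqNgt F4.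
Qed.

Lemma E1 y : y \notin l -> prefers L (inr d) (Some (inl y)).
Proof.
move=> yl; rewrite Lpref.
by rewrite F3 F2.
Qed.
End RealFacts.


Section DumFacts.
Variables (X Y Z : finType) (a : X) (h : Z -> Y).
Hypothesis ih : injective h.
Let L := dumL a h.
Lemma Dfull z : z \in L. Proof. by case: (dumL_full a ih) => _; apply. Qed.
Lemma Dpref u c : prefers L u (Some c) = (index u L < index c L).
Proof. exact: prefers_full Dfull. Qed.
Lemma Dhead : index (inl a) L = 0.
Proof. by rewrite /L /dumL /complete /= eqxx. Qed.
Lemma H0 u : ~~ prefers L u (Some (inl a)).
Proof. by rewrite Dpref Dhead ltn0. Qed.
Lemma H1 c : c != inl a -> prefers L (inl a) (Some c).
Proof. by move=> ne; rewrite Dpref Dhead /L /dumL /complete /= eq_sym (negbTE ne). Qed.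
Lemma H1' : prefers L (inl a) None.
Proof. by rewrite /prefers Dfull. Qed.
Lemma Dinr z : index (inr (h z)) L = (index z (enum Z)).+1.
Proof.
rewrite /L /dumL index_complete_in; last by rewrite in_cons map_f ?orbT ?mem_enum.
rewrite /= index_map //; by move=> ?? [] /ih.
Qed.
Lemma H2 z1 z2 : prefers L (inr (h z1)) (Some (inr (h z2))) = (index z1 (enum Z) < index z2 (enum Z)).
Proof. by rewrite Dpref !Dinr. Qed.
End DumFacts.

Lemma hus1 (A B : finType) (mu : A -> option B) a b :
  marriage mu -> mu a = Some b -> husband_of mu b = Some a.
Proof.
move=> mm hab; rewrite /husband_of; case: pickP => [x /eqP hx|/(_ a)].
  by rewrite (mm _ _ _ hx hab).
by rewrite hab eqxx.
Qed.

Lemma hus2 (A B : finType) (mu : A -> option B) a b :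
  husband_of mu b = Some a -> mu a = Some b.
Proof. by rewrite /husband_of; case: pickP => [x /eqP hx [<-]|]. Qed.

Lemma hus3 (A B : finType) (mu : A -> option B) a b :
  husband_of mu b = None -> mu a <> Some b.
Proof. by rewrite /husband_of; case: pickP => [//|/(_ a) h _ e]; rewrite e eqxx in h. Qed.

Lemma idx_filter (T : eqType) (p : pred T) (s : seq T) x y :
  uniq s -> x \in filter p s -> y \in filter p s -> index x s < index y s ->
  index x (filter p s) < index y (filter p s).
Proof.
elim: s => [//|b s IH] /= /andP[bs us].
have nb z : z \in filter p s -> (b == z) = false.
  by rewrite mem_filter => /andP[_ zs]; apply/negbTE; apply: contraNneq bs => ->.
case: (p b) => /=.
- rewrite !in_cons => /orP[/eqP->|xs] /orP[/eqP->|ys] /=; rewrite ?eqxx ?ltnn //;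
  try rewrite (nb _ xs); try rewrite (nb _ ys); rewrite ?ltnS //; exact: IH.
- move=> xs ys; rewrite (nb _ xs) (nb _ ys) ltnS; exact: IH.
Qed.

Lemma nth_some (T : eqType) (A : seq T) j w : uniq A ->
  (nth None (map Some A) j = Some w) <-> (w \in A /\ index w A = j).
Proof.
move=> uA; split.
  case: (ltnP j (size A)) => hj; last by rewrite nth_default // size_map.
  rewrite (nth_map w) // => -[<-]; split; [exact: mem_nth | exact: index_uniq].
move=> [wA <-]; rewrite (nth_map w) ?index_mem // nth_index //.
Qed.

Definition tr (A B : finType) (e : #|A| = #|B|) (a : A) : B :=
  enum_val (cast_ord e (enum_rank a)).

Lemma trK (A B : finType) (e : #|A| = #|B|) (e' : #|B| = #|A|) :
  cancel (tr e) (tr e').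
Proof.
move=> x; rewrite /tr enum_valK.
have -> : cast_ord e' (cast_ord e (enum_rank x)) = enum_rank x by apply: val_inj.
exact: enum_rankK.
Qed.

Lemma pmap_uniq_inj (A B : eqType) (mu : A -> option B) (s : seq A) :
  (forall a1 a2 b, mu a1 = Some b -> mu a2 = Some b -> a1 = a2) ->
  uniq s -> uniq (pmap mu s).
Proof.
move=> inj; elim: s => [//|x s IH] /= /andP[xs us].
case e: (mu x) => [y|]; last exact: IH.
rewrite /= IH // andbT mem_pmap; apply/mapP => -[x' x's e'].
by move: xs; rewrite (inj _ _ _ e (esym e')) x's.
Qed.

Lemma idx_inj (T : eqType) (s : seq T) x y :
  x \in s -> y \in s -> index x s = index y s -> x = y.
Proof. by move=> xs ys e; rewrite -(nth_index x xs) e nth_index. Qed.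

Definition ext (A A' B B' : finType) (f : A -> B') (ginv : A' -> B)
  (p : A -> seq B) : (A + A')%type -> seq (B + B')%type :=
  fun a => match a with inl w => realL (p w) (f w) | inr w' => dumL (ginv w') f end.

Lemma ext_full (A A' B B' : finType) (f : A -> B') (ginv : A' -> B) (p : A -> seq B) :
  injective f -> profile p -> full_profile (ext f ginv p).
Proof.
move=> fi hp [w|w'] /=; first exact: realL_full.
exact: dumL_full.
Qed.

Theorem lemma20 (n : nat) (W W' M M' : finType)
  (hW : #|W| = n) (hW' : #|W'| = n) (hM : #|M| = n) (hM' : #|M'| = n) :
  exists (extW : (W -> seq M) -> (W + W')%type -> seq (M + M')%type)
         (extM : (M -> seq W) -> (M + M')%type -> seq (W + W')%type),
    (forall pW : W -> seq M, profile pW -> full_profile (extW pW)) /\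
    (forall pM : M -> seq W, profile pM -> full_profile (extM pM)) /\
    (forall (pW : W -> seq M) (pM : M -> seq W) (mu : W -> option M),
       profile pW -> profile pM -> marriage mu ->
       (stable pW pM mu <->
        exists mu' : (W + W')%type -> option (M + M')%type,
          marriage mu' /\ stable (extW pW) (extM pM) mu' /\ submarriage mu mu')).
Proof.
have eWM : #|W| = #|M'| by rewrite hW hM'.
have eMW : #|M| = #|W'| by rewrite hM hW'.
pose f := tr eWM; pose finv := tr (esym eWM); pose g := tr eMW; pose ginv := tr (esym eMW).
have fK : cancel f finv := trK _ _.
have finvK : cancel finv f := trK _ _.
have gK : cancel g ginv := trK _ _.
have ginvK : cancel ginv g := trK _ _.
have fI : injective f := can_inj fK.
have gI : injective g := can_inj gK.
have ginvI : injective ginv := can_inj ginvK.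
exists (ext f ginv), (ext g finv).
split; first by move=> pW hp; exact: ext_full.
split; first by move=> pM hp; exact: ext_full.
move=> pW pM mu hpW hpM mm; split; last first.
{ move=> [mu' [mm' [[_ st'] sub]]].
  split.
  - move=> w m hwm.
    have h1 : mu' (inl w) = Some (inl m) by apply/sub.
    split.
    + case: (boolP (m \in pW w)) => // nm; exfalso.
      apply: (st' (inl w) (inr (f w))); apply/andP; split.
        by rewrite /= h1; apply: E1.
      rewrite /= fK.
      case E: (husband_of mu' (inr (f w))) => [a|]; last exact: H1'.
      apply: H1 => //; apply/eqP => ea; move: E; rewrite ea => /hus2.
      by rewrite h1.
    + case: (boolP (w \in pM m)) => // nw; exfalso.
      apply: (st' (inr (g m)) (inl m)); apply/andP; split; last first.
        by rewrite /= (hus1 mm' h1); apply: E1.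
      rewrite /= gK.
      case E: (mu' (inr (g m))) => [c|]; last exact: H1'.
      apply: H1 => //; apply/eqP => ec; rewrite ec in E.
      have := mm' _ _ _ h1 E; discriminate.
  - move=> w m /andP[p1 p2].
    apply: (st' (inl w) (inl m)); apply/andP; split => /=.
    + case e: (mu w) p1 => [y|] p1.
        have -> : mu' (inl w) = Some (inl y) by apply/sub.
        exact: A1.
      case e': (mu' (inl w)) => [[y|z]|].
      * by move/sub: e'; rewrite e.
      * exact: A2.
      * by rewrite /prefers Lfull.
    + case e: (husband_of mu m) p2 => [w0|] p2.
        have h0 : mu' (inl w0) = Some (inl m) by apply/sub; exact: hus2 e.
        by rewrite (hus1 mm' h0); apply: A1.
      case e': (husband_of mu' (inl m)) => [[y|z]|].
      * move/hus2/sub: e' => e'; exfalso; exact: hus3 e e'.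
      * exact: A2.
      * by rewrite /prefers Lfull. }
move=> [st1 st2].
pose A := [seq w <- enum W | mu w != None].
pose B := [seq m <- enum M | m \in pmap mu (enum W)].
have memA w : (w \in A) = (mu w != None) by rewrite mem_filter mem_enum andbT.
have memB m : reflect (exists w, mu w = Some m) (m \in B).
  rewrite mem_filter mem_enum andbT mem_pmap.
  apply: (iffP mapP) => [[w _ e]|[w e]]; first by exists w.
  by exists w; rewrite ?mem_enum.
have uA : uniq A by rewrite filter_uniq ?enum_uniq.
have uB : uniq B by rewrite filter_uniq ?enum_uniq.
have sAB : size A = size B.
  have uP : uniq (pmap mu (enum W)) by apply: pmap_uniq_inj => //; exact: enum_uniq.
  have -> : size B = size (pmap mu (enum W)).
    apply: perm_size; apply: uniq_perm => // m.
    by rewrite mem_filter mem_enum andbT.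
  by rewrite size_filter size_pmap; apply: eq_count => w; case: (mu w).
pose pr (m : M) : option (M + M')%type :=
  if m \in B then omap (fun w => inr (f w)) (nth None (map Some A) (index m B))
  else Some (inl m).
pose mu' (a : (W + W')%type) : option (M + M')%type :=
  match a with
  | inl w => Some (if mu w is Some m then inl m else inr (f w))
  | inr w' => pr (ginv w')
  end.
have PR1 m : m \notin B -> pr m = Some (inl m) by rewrite /pr => /negbTE ->.
have PR2 m : m \in B -> exists w, [/\ w \in A, index w A = index m B & pr m = Some (inr (f w))].
  move=> mB; rewrite /pr mB.
  case/memB: (mB) => w0 e0.
  have hi : index m B < size A by rewrite sAB index_mem.
  rewrite (nth_map w0) //; exists (nth w0 A (index m B)); split => //.
    exact: mem_nth.
  exact: index_uniq.
have K2 w : w \in A -> exists2 m, m \in B & index m B = index w A.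
  rewrite memA; case e: (mu w) => [m0|] // _.
  have hi : index w A < size B by rewrite -sAB index_mem memA e.
  exists (nth m0 B (index w A)); [exact: mem_nth | exact: index_uniq].
have inB w m : mu w = Some m -> m \in B by move=> e; apply/memB; exists w.
have mm' : marriage mu'.
  move=> [w1|w1'] [w2|w2'] b /=.
  - case e1: (mu w1) => [m1|]; case e2: (mu w2) => [m2|] => <- // [].
      by move=> em; rewrite em in e2; rewrite (mm _ _ _ e1 e2).
    by move/fI ->.
  - rewrite /= in b *; case: (boolP (ginv w2' \in B)) => hB.
      have [w [wA _ ->]] := PR2 _ hB.
      case e1: (mu w1) => [m1|] <- // [] /fI ew.
      by move: wA; rewrite memA ew e1.
    rewrite PR1 //; case e1: (mu w1) => [m1|] <- // [] em.
    by move: hB; rewrite em (inB _ _ e1).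
  - rewrite /= in b *; case: (boolP (ginv w1' \in B)) => hB.
      have [w [wA _ ->]] := PR2 _ hB.
      case e2: (mu w2) => [m2|] <- // [] /fI ew.
      by move: wA; rewrite memA -ew e2.
    rewrite PR1 //; case e2: (mu w2) => [m2|] <- // [] em.
    by move: hB; rewrite -em (inB _ _ e2).
  - case: (boolP (ginv w1' \in B)) => hB1; case: (boolP (ginv w2' \in B)) => hB2.
    + have [v1 [v1A i1 ->]] := PR2 _ hB1; have [v2 [v2A i2 ->]] := PR2 _ hB2.
      move=> <- [] /fI ev.
      have : index (ginv w2') B = index (ginv w1') B by rewrite -i1 -i2 ?ev ?(esym ev).
      by move/(idx_inj hB2 hB1)/ginvI ->.
    + have [v1 [v1A i1 ->]] := PR2 _ hB1; by rewrite PR1 // => <-.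
    + have [v2 [v2A i2 ->]] := PR2 _ hB2; by rewrite PR1 // => <-.
    + by rewrite !PR1 // => <- [] /ginvI ->.
have HM m : husband_of mu' (inl m) =
    if husband_of mu m is Some w0 then Some (inl w0) else Some (inr (g m)).
  case e: (husband_of mu m) => [w0|].
    by apply: hus1 mm' _; rewrite /= (hus2 e).
  apply: hus1 mm' _; rewrite /= gK PR1 //.
  by apply/memB => -[w hw]; exact: hus3 e hw.
have HF1 w : mu w = None -> husband_of mu' (inr (f w)) = Some (inl w).
  by move=> e; apply: hus1 mm' _; rewrite /= e.
have HF2 w : w \in A -> exists2 m1, m1 \in B & index m1 B = index w A /\
    husband_of mu' (inr (f w)) = Some (inr (g m1)).
  move=> wA; have [m1 m1B i1] := K2 _ wA.
  exists m1 => //; split => //; apply: hus1 mm' _.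
  have [w1 [w1A i2 e]] := PR2 _ m1B.
  rewrite /= gK e; congr (Some (inr (f _))).
  by apply: idx_inj w1A wA _; rewrite i2 i1.
exists mu'; split => //; split; last first.
  by move=> w m /=; case: (mu w) => [y|]; split => //; case=> ->.
split.
  move=> a b _; split.
    by case: (ext_full ginv fI hpW a) => _; apply.
  by case: (ext_full finv gI hpM b) => _; apply.
move=> [w|w'] [m|m'].
- rewrite /= => /andP[h1 h2]; apply: (st2 w m); apply/andP; split.
    case e: (mu w) h1 => [y|] h1; last exact: B2 h1.
    by apply: B1 h1; [exact: hpW | exact: (st1 _ _ e).1].
  rewrite HM in h2; case e: (husband_of mu m) h2 => [w0|] h2; last exact: B2 h2.
  by apply: B1 h2; [exact: hpM | exact: (st1 _ _ (hus2 e)).2].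
- apply/negP; rewrite negb_and; apply/orP; left => /=.
  case e: (mu w) => [y|]; last by apply: C2.
  by apply: C1; [exact: hpW | exact: (st1 _ _ e).1].
- apply/negP; rewrite negb_and; apply/orP; right => /=.
  rewrite HM; case e: (husband_of mu m) => [w0|]; last by apply: C2.
  by apply: C1; [exact: hpM | exact: (st1 _ _ (hus2 e)).2].
- have [m ->] : exists m, w' = g m by exists (ginv w'); rewrite ginvK.
  have [w ->] : exists w, m' = f w by exists (finv m'); rewrite finvK.
  rewrite /= gK fK => /andP[h1 h2].
  case: (boolP (m \in B)) => hB; last by move: h1; rewrite PR1 //; apply/negP; apply: H0.
  case e: (mu w) => [y|]; last by move: h2; rewrite HF1 //; apply/negP; apply: H0.
  have wA : w \in A by rewrite memA e.
  have [w1 [w1A i1 e1]] := PR2 _ hB.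
  have [m1 m1B [i2 e2]] := HF2 _ wA.
  rewrite e1 H2 // in h1; rewrite e2 H2 // in h2.
  have a1 := idx_filter (enum_uniq W) wA w1A h1.
  have a2 := idx_filter (enum_uniq M) hB m1B h2.
  rewrite i1 in a1; rewrite i2 in a2.
  by have := ltn_trans a1 a2; rewrite ltnn.
Qed.
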